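(* Fix $\gamma \in (\tfrac{2}{3},2)$ and let $x \in B_1^+(\mathrm{VI}_0)$. Suppose the Taub point $T_1$ belongs to the $\alpha$-limit set $\alpha(x)$. Then there exists a point $y \in \alpha(x)$ with $y \neq T_1$ and $\Omega(y) = 0$.
   Context: Set $q^* := \tfrac{3\gamma-2}{2} \in (0,2)$. On $\mathbb{R}^5$ with coordinates $(\Sigma_+,\Sigma_-,N_+,N_-,\Omega)$ consider the system (with $' = d/d\tau$) $\Sigma_+' = -(2-q)\Sigma_+ - 2N_-^2$, $\Sigma_-' = -(2-q)\Sigma_- - 2\sqrt{3}N_+N_-$, $N_+' = (q+2\Sigma_+)N_+ + 2\sqrt{3}\Sigma_- N_-$, $N_-' = (q+2\Sigma_+)N_- + 2\sqrt{3}\Sigma_- N_+$, $\Omega' = 2(q-q^* )\Omega$, where $q := 2(\Sigma_+^2+\Sigma_-^2) + q^*\Omega$. The phase space $B_1^+(\mathrm{VI}_0)$ is the set of points satisfying the constraint $\Omega + \Sigma_+^2 + \Sigma_-^2 + N_-^2 = 1$ together with $\Omega \ge 0$ and $N_- > |N_+|$; it is invariant under the flow, solutions exist for all $\tau\in\mathbb{R}$, and $\varphi^\tau(x)$ denotes the solution with $\varphi^0(x)=x$. The $\alpha$-limit set $\alpha(x)$ is the set of all limits of sequences $\varphi^{\tau_k}(x)$ with $\tau_k \to -\infty$ (these lie in the closure of $B_1^+(\mathrm{VI}_0)$ in $\mathbb{R}^5$). The Taub point $T_1$ is the point with $(\Sigma_+,\Sigma_-,N_+,N_-,\Omega) = (-1,0,0,0,0)$.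 *)

(* Defs.v *)
From Stdlib Require Import Reals.
From Coquelicot Require Import Coquelicot.
Open Scope R_scope.

Record pt : Type := mkpt { Sp : R; Sm : R; Np : R; Nm : R; Om : R }.

Definition qstar (g : R) : R := (3 * g - 2) / 2.

Definition qf (g : R) (p : pt) : R :=
  2 * (Sp p ^ 2 + Sm p ^ 2) + qstar g * Om p.

Definition vf (g : R) (p : pt) : pt :=
  mkpt (- (2 - qf g p) * Sp p - 2 * Nm p ^ 2)
       (- (2 - qf g p) * Sm p - 2 * sqrt 3 * Np p * Nm p)
       ((qf g p + 2 * Sp p) * Np p + 2 * sqrt 3 * Sm p * Nm p)
       ((qf g p + 2 * Sp p) * Nm p + 2 * sqrt 3 * Sm p * Np p)
       (2 * (qf g p - qstar g) * Om p).

Definition is_solution (g : R) (phi : R -> pt) : Prop :=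
  forall t : R,
    is_derive (fun s => Sp (phi s)) t (Sp (vf g (phi t))) /\
    is_derive (fun s => Sm (phi s)) t (Sm (vf g (phi t))) /\
    is_derive (fun s => Np (phi s)) t (Np (vf g (phi t))) /\
    is_derive (fun s => Nm (phi s)) t (Nm (vf g (phi t))) /\
    is_derive (fun s => Om (phi s)) t (Om (vf g (phi t))).

Definition in_B1plus (p : pt) : Prop :=
  Om p + Sp p ^ 2 + Sm p ^ 2 + Nm p ^ 2 = 1 /\ 0 <= Om p /\ Nm p > Rabs (Np p).

Definition in_alpha_limit (phi : R -> pt) (y : pt) : Prop :=
  exists tk : nat -> R,
    is_lim_seq tk m_infty /\
    is_lim_seq (fun k => Sp (phi (tk k))) (Sp y) /\
    is_lim_seq (fun k => Sm (phi (tk k))) (Sm y) /\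
    is_lim_seq (fun k => Np (phi (tk k))) (Np y) /\
    is_lim_seq (fun k => Nm (phi (tk k))) (Nm y) /\
    is_lim_seq (fun k => Om (phi (tk k))) (Om y).

Definition T1 : pt := mkpt (-1) 0 0 0 0.

(* Main.v *)
Require Import Defs.
From Stdlib Require Import Reals Lra Psatz Classical IndefiniteDescription.
From Coquelicot Require Import Coquelicot.
Open Scope R_scope.

Lemma cont_pt_of_derive (f : R -> R) x l : is_derive f x l -> continuity_pt f x.
Proof.
  intro H. apply continuity_pt_filterlim. exact (ex_derive_continuous (K:=R_AbsRing) (V:=R_NormedModule) f x (ex_intro _ l H)).
Qed.

Lemma mono_up (f df : R -> R) a b : a <= b ->
  (forall x, a <= x <= b -> is_derive f x (df x) /\ 0 <= df x) -> f a <= f b.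
Proof.
  intros Hab H.
  destruct (MVT_gen f a b df) as [c [Hc Heq]].
  - intros x Hx. rewrite Rmin_left in Hx by lra. rewrite Rmax_right in Hx by lra.
    apply H; lra.
  - intros x Hx. rewrite Rmin_left in Hx by lra. rewrite Rmax_right in Hx by lra.
    apply (cont_pt_of_derive _ _ (df x)). apply H; lra.
  - rewrite Rmin_left in Hc by lra. rewrite Rmax_right in Hc by lra.
    destruct (H c Hc) as [_ Hd]. nra.
Qed.

Lemma linear_ode (f a : R -> R) :
  (forall t, continuous a t) -> (forall t, is_derive f t (a t * f t)) ->
  forall t, f t = f 0 * exp (RInt a 0 t).
Proof.
  intros Ca Df.
  assert (DI : forall t, is_derive (fun s => RInt a 0 s) t (a t)).
  { intro t. apply is_derive_RInt with (a := 0).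
    - apply filter_forall. intro b. apply RInt_correct.
      apply ex_RInt_continuous. intros z _. apply Ca.
    - apply Ca. }
  set (h := fun s => f s * exp (- RInt a 0 s)).
  assert (Dh : forall t, is_derive h t 0).
  { intro t. unfold h. auto_derive.
    - split. eexists; apply Df. split.
      apply (ex_RInt_continuous (V:=R_CompleteNormedModule)). intros z _. apply Ca.
      split; [|easy]. apply filter_forall. intro z. apply continuity_pt_filterlim. apply Ca.
    - rewrite (is_derive_unique (fun x : R => f x) t _ (Df t)). ring. }
  intro t.
  assert (E : h t = h 0).
  { destruct (MVT_gen h 0 t (fun _ => 0)) as [c [_ Hc]].
    - intros; apply Dh.
    - intros; apply (cont_pt_of_derive _ _ 0); apply Dh.
    - lra. }
  assert (E' : f t * exp (- RInt a 0 t) = f 0).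
  { change (h t = f 0). rewrite E. unfold h. rewrite RInt_point. unfold zero; simpl. rewrite Ropp_0, exp_0; ring. }
  rewrite <- E'. rewrite Rmult_assoc, <- exp_plus.
  replace (- RInt a 0 t + RInt a 0 t) with 0 by ring. rewrite exp_0; ring.
Qed.

Definition Qf (g : R) (a b e : R -> R) (t : R) : R := 2 * (a t ^ 2 + b t ^ 2) + qstar g * e t.

Definition SOL (g : R) (a b c d e : R -> R) : Prop := forall t,
  is_derive a t (- (2 - Qf g a b e t) * a t - 2 * d t ^ 2) /\
  is_derive b t (- (2 - Qf g a b e t) * b t - 2 * sqrt 3 * c t * d t) /\
  is_derive c t ((Qf g a b e t + 2 * a t) * c t + 2 * sqrt 3 * b t * d t) /\
  is_derive d t ((Qf g a b e t + 2 * a t) * d t + 2 * sqrt 3 * b t * c t) /\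
  is_derive e t (2 * (Qf g a b e t - qstar g) * e t).

Ltac dsol H t :=
  let Da := fresh in let Db := fresh in let Dc := fresh in let Dd := fresh in let De := fresh in
  destruct (H t) as (Da & Db & Dc & Dd & De);
  auto_derive;
  [ repeat split; eexists; eassumption
  | try rewrite (is_derive_unique (fun x : R => _ x) t _ Da);
    try rewrite (is_derive_unique (fun x : R => _ x) t _ Db);
    try rewrite (is_derive_unique (fun x : R => _ x) t _ Dc);
    try rewrite (is_derive_unique (fun x : R => _ x) t _ Dd);
    try rewrite (is_derive_unique (fun x : R => _ x) t _ De);
    unfold Qf ].

Ltac csol H t :=
  let Da := fresh in let Db := fresh in let Dc := fresh in let Dd := fresh in let De := fresh in
  destruct (H t) as (Da & Db & Dc & Dd & De);
  apply (ex_derive_continuous (K:=R_AbsRing) (V:=R_NormedModule));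
  unfold Qf; auto_derive; repeat split; eexists; eassumption.

Lemma inv_G g a b c d e : SOL g a b c d e -> e 0 + a 0 ^ 2 + b 0 ^ 2 + d 0 ^ 2 = 1 ->
  forall t, e t + a t ^ 2 + b t ^ 2 + d t ^ 2 = 1.
Proof.
  intros H H0 t.
  assert (L := linear_ode (fun s => e s + a s ^ 2 + b s ^ 2 + d s ^ 2 - 1) (fun s => 2 * Qf g a b e s)).
  assert (L' : e t + a t ^ 2 + b t ^ 2 + d t ^ 2 - 1 = 0).
  { rewrite L. replace (e 0 + a 0 ^ 2 + b 0 ^ 2 + d 0 ^ 2 - 1) with 0 by lra. ring.
    - intro s. csol H s.
    - intro s. dsol H s. ring. }
  lra.
Qed.

Lemma inv_Om g a b c d e : SOL g a b c d e -> 0 <= e 0 -> forall t, 0 <= e t.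
Proof.
  intros H H0 t.
  assert (L := linear_ode e (fun s => 2 * (Qf g a b e s - qstar g))).
  rewrite L.
  - apply Rmult_le_pos; [exact H0 | left; apply exp_pos].
  - intro s. csol H s.
  - intro s. destruct (H s) as (_ & _ & _ & _ & De). exact De.
Qed.

Lemma inv_D g a b c d e : SOL g a b c d e -> 0 < d 0 ^ 2 - c 0 ^ 2 -> forall t, 0 < d t ^ 2 - c t ^ 2.
Proof.
  intros H H0 t.
  assert (L := linear_ode (fun s => d s ^ 2 - c s ^ 2) (fun s => 2 * (Qf g a b e s + 2 * a s))).
  rewrite L.
  - apply Rmult_lt_0_compat; [exact H0 | apply exp_pos].
  - intro s. csol H s.
  - intro s. dsol H s. ring.
Qed.

Lemma qb (qs A B D E : R) : 0 < 2 - qs -> E + A ^ 2 + B ^ 2 + D ^ 2 = 1 -> 0 <= E ->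
  1 + A <= (2 - qs) / (4 * (2 - qs) + 8) ->
  2 * (A ^ 2 + B ^ 2) + qs * E - qs >= (2 - qs) / 2.
Proof.
  intros Hc HC HE Hu.
  set (c := 2 - qs) in *. set (eta := c / (4 * c + 8)) in *.
  assert (Heta : eta * (4 * c + 8) = c) by (unfold eta; field; lra).
  assert (Heta0 : 0 < eta) by (unfold eta; apply Rdiv_lt_0_compat; lra).
  assert (HA : -1 <= A) by nra.
  assert (Hs : E + B ^ 2 + D ^ 2 <= 2 * (1 + A)) by nra.
  assert (E1 : 2 * (A ^ 2 + B ^ 2) + qs * E - qs = c * (1 - E) - 2 * D ^ 2) by (unfold c; nra).
  rewrite E1. nra.
Qed.

Lemma wd_alg (qs k A B C D E : R) : 0 < 2 - qs -> E + A ^ 2 + B ^ 2 + D ^ 2 = 1 -> 0 <= E ->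
  1 + A <= (2 - qs) / (4 * (2 - qs) + 8) -> k = 4 / (2 - qs) ->
  let Q := 2 * (A ^ 2 + B ^ 2) + qs * E in
  2 * B * (- (2 - Q) * B - 2 * sqrt 3 * C * D) + 2 * D * ((Q + 2 * A) * D + 2 * sqrt 3 * B * C)
  - k * (2 * (Q - qs) * E) * (B ^ 2 + D ^ 2) <= 0.
Proof.
  intros Hc HC HE Hu Hk Q.
  assert (HQ := qb qs A B D E Hc HC HE Hu). fold Q in HQ.
  set (c := 2 - qs) in *.
  assert (Hk' : k * c = 4) by (rewrite Hk; field; lra).
  assert (Hk0 : 0 < k) by (rewrite Hk; apply Rdiv_lt_0_compat; lra).
  assert (Heta1 : (c / (4 * c + 8)) * (4 * c + 8) = c) by (field; lra).
  assert (Heta2 : 0 < c / (4 * c + 8)) by (apply Rdiv_lt_0_compat; lra).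
  assert (Heta : c / (4 * c + 8) <= 1) by nra.
  assert (HA : -1 <= A) by nra.
  assert (E1 : 2 * B * (- (2 - Q) * B - 2 * sqrt 3 * C * D) + 2 * D * ((Q + 2 * A) * D + 2 * sqrt 3 * B * C)
     = 4 * D ^ 2 * (E + (1 + A) ^ 2 - (1 + A)) - 2 * c * E * (B ^ 2 + D ^ 2)).
  { unfold Q, c. replace E with (1 - A ^ 2 - B ^ 2 - D ^ 2) by lra. ring. }
  rewrite E1.
  assert (T1 : 4 * D ^ 2 * (E + (1 + A) ^ 2 - (1 + A)) <= 4 * E * (B ^ 2 + D ^ 2)).
  { assert ((1 + A) ^ 2 - (1 + A) <= 0) by nra. nra. }
  assert (T2 : 0 <= E * (B ^ 2 + D ^ 2)) by nra.
  assert (T3 : k * (2 * (Q - qs) * E) * (B ^ 2 + D ^ 2) >= k * c * E * (B ^ 2 + D ^ 2)).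
  { assert (2 * (Q - qs) >= c) by lra.
    assert (k * (2 * (Q - qs)) >= k * c) by nra. nra. }
  rewrite Hk' in T3. nra.
Qed.

Definition GOOD g (a b c d e : R -> R) : Prop := SOL g a b c d e /\
  (forall t, e t + a t ^ 2 + b t ^ 2 + d t ^ 2 = 1) /\ (forall t, 0 <= e t) /\
  (forall t, 0 < d t ^ 2 - c t ^ 2).

Definition eta g := (2 - qstar g) / (4 * (2 - qstar g) + 8).
Definition kk g := 4 / (2 - qstar g).

Lemma qs_pos g : 2 / 3 < g < 2 -> 0 < 2 - qstar g.
Proof. intros; unfold qstar; lra. Qed.

Lemma eta_pos g : 2 / 3 < g < 2 -> 0 < eta g.
Proof. intros H; assert (h := qs_pos g H); unfold eta; apply Rdiv_lt_0_compat; lra. Qed.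

Lemma case1 g a b c d e T : 2 / 3 < g < 2 -> GOOD g a b c d e ->
  (forall t, t <= T -> 1 + a t <= eta g) ->
  forall t, t <= T -> (b T ^ 2 + d T ^ 2) * exp (- kk g * e T) <= b t ^ 2 + d t ^ 2.
Proof.
  intros Hg (HS & HC & HE & HD) Hu t Ht.
  assert (Hc := qs_pos g Hg).
  assert (Hk : 0 < kk g) by (unfold kk; apply Rdiv_lt_0_compat; lra).
  assert (M := mono_up (fun s => - ((b s ^ 2 + d s ^ 2) * exp (- kk g * e s)))
     (fun s => - exp (- kk g * e s) *
        (2 * b s * (- (2 - Qf g a b e s) * b s - 2 * sqrt 3 * c s * d s)
         + 2 * d s * ((Qf g a b e s + 2 * a s) * d s + 2 * sqrt 3 * b s * c s)
         - kk g * (2 * (Qf g a b e s - qstar g) * e s) * (b s ^ 2 + d s ^ 2))) t T Ht).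
  assert (Hm : - ((b t ^ 2 + d t ^ 2) * exp (- kk g * e t)) <= - ((b T ^ 2 + d T ^ 2) * exp (- kk g * e T))).
  { apply M. intros x Hx. split.
    - dsol HS x. ring.
    - assert (W := wd_alg (qstar g) (kk g) (a x) (b x) (c x) (d x) (e x) Hc (HC x) (HE x)
                  (Hu x ltac:(lra)) eq_refl).
      simpl in W. unfold Qf. assert (0 < exp (- kk g * e x)) by apply exp_pos. nra. }
  assert (exp (- kk g * e t) <= 1).
  { rewrite <- exp_0. destruct (Req_dec (e t) 0) as [E|E].
    - rewrite E. right. f_equal. ring.
    - left. apply exp_increasing. assert (0 < e t) by (destruct (HE t); [auto| congruence]). nra. }
  assert (0 <= b t ^ 2 + d t ^ 2) by nra.
  nra.
Qed.

Lemma cont_eps (f : R -> R) x : continuity_pt f x ->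
  forall eps, 0 < eps -> exists alp, 0 < alp /\ forall y, Rabs (y - x) < alp -> Rabs (f y - f x) < eps.
Proof.
  intros H eps Heps. destruct (H eps Heps) as [alp [Ha Hy]].
  exists alp. split; [exact Ha|]. intros y Hyx. destruct (Req_dec x y) as [E|E].
  - subst. rewrite Rminus_eq_0, Rabs_R0. exact Heps.
  - apply (Hy y). split; [split; [exact I| exact E]| exact Hyx].
Qed.

Lemma case2 g a b c d e T t0 : 2 / 3 < g < 2 -> GOOD g a b c d e ->
  t0 <= T -> 1 + a T < eta g -> eta g < 1 + a t0 ->
  exists s, s <= T /\ eta g <= 1 + a s /\ e s <= e T.
Proof.
  intros Hg (HS & HC & HE & HD) Ht0 HT Ht0'.
  assert (Hc := qs_pos g Hg).
  assert (Ca : forall x, continuity_pt a x).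
  { intro x. destruct (HS x) as (Da & _). exact (cont_pt_of_derive _ _ _ Da). }
  set (EE := fun x => x <= T /\ eta g <= 1 + a x).
  assert (Hb : bound EE) by (exists T; intros x [Hx _]; exact Hx).
  assert (Hne : exists x, EE x) by (exists t0; split; lra).
  destruct (completeness EE Hb Hne) as [s [Hub Hlub]].
  assert (HsT : s <= T) by (apply Hlub; intros x [Hx _]; exact Hx).
  assert (Hst0 : t0 <= s) by (apply Hub; split; lra).
  assert (A : eta g <= 1 + a s).
  { destruct (Rle_or_lt (eta g) (1 + a s)) as [h|h]; [exact h|].
    destruct (cont_eps a s (Ca s) (eta g - (1 + a s)) ltac:(lra)) as [alp [Halp Hy]].
    assert (Hx : exists x, EE x /\ s - alp < x).
    { apply NNPP. intro N.
      assert (s <= s - alp); [|lra].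
      apply Hlub. intros x Hx. destruct (Rle_or_lt x (s - alp)) as [h2|h2]; [exact h2|].
      exfalso; apply N; exists x; auto. }
    destruct Hx as [x [[Hx1 Hx2] Hx3]].
    assert (x <= s) by (apply Hub; split; auto).
    assert (Rabs (x - s) < alp) by (apply Rabs_def1; lra).
    specialize (Hy x ltac:(assumption)). apply Rabs_def2 in Hy. lra. }
  assert (C : forall x, s <= x <= T -> 1 + a x <= eta g).
  { intros x [Hx1 Hx2].
    destruct (Rle_or_lt (1 + a x) (eta g)) as [h|h]; [exact h|].
    assert (Hxs : x <= s) by (apply Hub; split; lra).
    assert (x = s) by lra. subst x.
    destruct (Req_dec s T) as [E|E]; [subst; lra|].
    destruct (cont_eps a s (Ca s) ((1 + a s) - eta g) ltac:(lra)) as [alp [Halp Hy]].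
    set (x := Rmin (s + alp / 2) T).
    assert (Hx1' : s < x) by (unfold x; apply Rmin_glb_lt; lra).
    assert (Hx2' : x <= s + alp / 2) by apply Rmin_l.
    assert (Hx3' : x <= T) by apply Rmin_r.
    assert (Rabs (x - s) < alp) by (apply Rabs_def1; lra).
    specialize (Hy x ltac:(assumption)). apply Rabs_def2 in Hy.
    assert (x <= s) by (apply Hub; split; lra). lra. }
  exists s. split; [exact HsT|]. split; [exact A|].
  apply (mono_up e (fun x => 2 * (Qf g a b e x - qstar g) * e x) s T HsT).
  intros x Hx. split.
  - destruct (HS x) as (_ & _ & _ & _ & De). exact De.
  - assert (Q := qb (qstar g) (a x) (b x) (d x) (e x) Hc (HC x) (HE x) (C x Hx)).
    unfold Qf. specialize (HE x). nra.
Qed.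

Lemma bw (u : nat -> R) : (forall n, -1 <= u n <= 1) ->
  exists psi : nat -> nat, exists l : R,
    (forall n, (psi n < psi (S n))%nat) /\ is_lim_seq (fun n => u (psi n)) l.
Proof.
  intro Hu.
  destruct (Bolzano_Weierstrass u _ (compact_P3 (-1) 1) Hu) as [l Hl].
  assert (Hp : forall N n : nat, exists p, (N <= p)%nat /\ Rabs (u p - l) < / (INR n + 1)).
  { intros N n.
    assert (Hpos : 0 < / (INR n + 1)) by (apply Rinv_0_lt_compat; assert (h := pos_INR n); lra).
    destruct (Hl (disc l (mkposreal _ Hpos)) N) as [p [Hp1 Hp2]].
    - exists (mkposreal _ Hpos). intros y Hy. exact Hy.
    - exists p. split; [exact Hp1| exact Hp2]. }
  set (pick := fun N n => proj1_sig (constructive_indefinite_description _ (Hp N n))).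
  assert (Hpick : forall N n, (N <= pick N n)%nat /\ Rabs (u (pick N n) - l) < / (INR n + 1)).
  { intros N n. unfold pick. destruct (constructive_indefinite_description _ (Hp N n)) as [p Hpp]. exact Hpp. }
  set (psi := fix psi (n : nat) : nat := match n with O => pick O O | S m => pick (S (psi m)) (S m) end).
  exists psi, l. split.
  - intro n. simpl. apply (Hpick (S (psi n)) (S n)).
  - apply is_lim_seq_spec. intro eps.
    destruct (archimed_cor1 eps (cond_pos eps)) as [N [HN1 HN2]].
    exists N. intros n Hn.
    assert (Hb : Rabs (u (psi n) - l) < / (INR n + 1)).
    { destruct n; simpl; apply Hpick. }
    assert (INR N <= INR n) by (apply le_INR; exact Hn).
    assert (0 < INR N) by (apply lt_0_INR; exact HN2).
    assert (/ (INR n + 1) <= / INR N) by (apply Rinv_le_contravar; lra).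
    lra.
Qed.

Lemma strict_mono (psi : nat -> nat) : (forall n, (psi n < psi (S n))%nat) ->
  forall n m, (n <= m)%nat -> (psi n <= psi m)%nat.
Proof.
  intros H n m Hnm. induction Hnm; [lia|]. specialize (H m). lia.
Qed.

Lemma strict_ge (psi : nat -> nat) : (forall n, (psi n < psi (S n))%nat) -> forall n, (n <= psi n)%nat.
Proof. intros H n. induction n; [lia|]. specialize (H n). lia. Qed.

Lemma strict_lt (psi : nat -> nat) : (forall n, (psi n < psi (S n))%nat) ->
  forall n m, (n < m)%nat -> (psi n < psi m)%nat.
Proof.
  intros H n m Hnm. assert (h := strict_mono psi H (S n) m Hnm). specialize (H n). lia.
Qed.

Lemma incr_comp (psi phi : nat -> nat) : (forall n, (psi n < psi (S n))%nat) ->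
  (forall n, (phi n < phi (S n))%nat) -> forall n, (psi (phi n) < psi (phi (S n)))%nat.
Proof. intros H1 H2 n. apply strict_lt; auto. Qed.

Lemma sub (u : nat -> R) (l : Rbar) (phi : nat -> nat) : (forall n, (phi n < phi (S n))%nat) ->
  is_lim_seq u l -> is_lim_seq (fun n => u (phi n)) l.
Proof. intros H L. apply is_lim_seq_subseq; [apply eventually_subseq; exact H| exact L]. Qed.

Lemma lim_sq2 (u v : nat -> R) : is_lim_seq u 0 -> is_lim_seq v 0 ->
  is_lim_seq (fun n => u n ^ 2 + v n ^ 2) 0.
Proof.
  intros Hu Hv.
  apply is_lim_seq_ext with (fun n => u n * u n + v n * v n); [intro n; ring|].
  replace 0 with (0 * 0 + 0 * 0) by ring.
  apply is_lim_seq_plus'; apply is_lim_seq_mult'; assumption.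
Qed.

Lemma bounds (A B C D E : R) : E + A ^ 2 + B ^ 2 + D ^ 2 = 1 -> 0 <= E -> 0 < D ^ 2 - C ^ 2 ->
  (-1 <= A <= 1) /\ (-1 <= B <= 1) /\ (-1 <= C <= 1) /\ (-1 <= D <= 1) /\ (-1 <= E <= 1).
Proof. intros H1 H2 H3. repeat split; nra. Qed.

Theorem mainTheorem1 (g : R) (phi : R -> pt) :
  2 / 3 < g < 2 ->
  is_solution g phi ->
  in_B1plus (phi 0) ->
  in_alpha_limit phi T1 ->
  exists y : pt, in_alpha_limit phi y /\ y <> T1 /\ Om y = 0.
Proof.
  intros Hg Hsol [H0C [H0E H0D]] [tk [Ltk [L1 [L2 [L3 [L4 L5]]]]]].
  simpl in L1, L2, L3, L4, L5.
  set (a := fun t => Sp (phi t)) in *.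
  set (b := fun t => Sm (phi t)) in *.
  set (c := fun t => Np (phi t)) in *.
  set (d := fun t => Nm (phi t)) in *.
  set (e := fun t => Om (phi t)) in *.
  assert (HS : SOL g a b c d e).
  { intro t. destruct (Hsol t) as (D1 & D2 & D3 & D4 & D5).
    split; [exact D1|]. split; [exact D2|]. split; [exact D3|]. split; [exact D4| exact D5]. }
  assert (HC := inv_G g a b c d e HS H0C).
  assert (HE := inv_Om g a b c d e HS H0E).
  assert (HD : forall t, 0 < d t ^ 2 - c t ^ 2).
  { apply (inv_D g a b c d e HS).
    assert (Rabs (c 0) ^ 2 = c 0 ^ 2) by apply pow2_abs.
    assert (0 <= Rabs (c 0)) by apply Rabs_pos.
    unfold a, b, c, d, e in *. nra. }
  assert (G : GOOD g a b c d e) by (split; [|split; [|split]]; assumption).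
  assert (Heta := eta_pos g Hg).
  assert (Hc := qs_pos g Hg).
  assert (Hk : 0 < kk g) by (unfold kk; apply Rdiv_lt_0_compat; lra).
  assert (W0 : is_lim_seq (fun n => b (tk n) ^ 2 + d (tk n) ^ 2) 0) by (apply lim_sq2; assumption).
  assert (St1 : forall T, 1 + a T < eta g -> exists t0, t0 <= T /\ eta g < 1 + a t0).
  { intros T HT. apply NNPP. intro N.
    assert (Hall : forall t, t <= T -> 1 + a t <= eta g).
    { intros t Ht. destruct (Rle_or_lt (1 + a t) (eta g)) as [h|h]; [exact h|].
      exfalso; apply N; exists t; auto. }
    assert (C1 := case1 g a b c d e T Hg G Hall).
    set (HT0 := (b T ^ 2 + d T ^ 2) * exp (- kk g * e T)).
    assert (HT0p : 0 < HT0).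
    { unfold HT0. apply Rmult_lt_0_compat; [|apply exp_pos]. specialize (HD T). nra. }
    apply is_lim_seq_spec in Ltk. apply is_lim_seq_spec in W0.
    destruct (Ltk T) as [N1 HN1]. destruct (W0 (mkposreal _ HT0p)) as [N2 HN2].
    specialize (HN1 (max N1 N2) ltac:(lia)). specialize (HN2 (max N1 N2) ltac:(lia)).
    simpl in HN2. specialize (C1 (tk (max N1 N2)) ltac:(lra)).
    rewrite Rminus_0_r in HN2. apply Rabs_def2 in HN2. fold HT0 in C1. lra. }
  assert (St2 : exists N0, forall n, (N0 <= n)%nat -> 1 + a (tk n) < eta g).
  { apply is_lim_seq_spec in L1. destruct (L1 (mkposreal _ Heta)) as [N0 HN0].
    exists N0. intros n Hn. specialize (HN0 n Hn). simpl in HN0. apply Rabs_def2 in HN0. unfold a in *. lra. }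
  destruct St2 as [N0 HN0].
  assert (St3 : forall n, exists s, s <= tk (n + N0)%nat /\ eta g <= 1 + a s /\ e s <= e (tk (n + N0)%nat)).
  { intro n. assert (h := HN0 (n + N0)%nat ltac:(lia)).
    destruct (St1 _ h) as [t0 [Ht0 Ht0']].
    exact (case2 g a b c d e _ t0 Hg G Ht0 h Ht0'). }
  set (s := fun n => proj1_sig (constructive_indefinite_description _ (St3 n))).
  assert (Hs : forall n, s n <= tk (n + N0)%nat /\ eta g <= 1 + a (s n) /\ e (s n) <= e (tk (n + N0)%nat)).
  { intro n. unfold s. destruct (constructive_indefinite_description _ (St3 n)) as [x Hx]. exact Hx. }
  assert (Bd : forall t, (-1 <= a t <= 1) /\ (-1 <= b t <= 1) /\ (-1 <= c t <= 1) /\ (-1 <= d t <= 1) /\ (-1 <= e t <= 1)).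
  { intro t. apply bounds; auto. }
  destruct (bw (fun n => a (s n)) (fun n => proj1 (Bd (s n)))) as [p1 [la [Ip1 La]]].
  destruct (bw (fun n => b (s (p1 n))) (fun n => proj1 (proj2 (Bd (s (p1 n)))))) as [p2 [lb [Ip2 Lb]]].
  destruct (bw (fun n => c (s (p1 (p2 n)))) (fun n => proj1 (proj2 (proj2 (Bd (s (p1 (p2 n)))))))) as [p3 [lc [Ip3 Lc]]].
  destruct (bw (fun n => d (s (p1 (p2 (p3 n))))) (fun n => proj1 (proj2 (proj2 (proj2 (Bd (s (p1 (p2 (p3 n)))))))))) as [p4 [ld [Ip4 Ld]]].
  destruct (bw (fun n => e (s (p1 (p2 (p3 (p4 n)))))) (fun n => proj2 (proj2 (proj2 (proj2 (Bd (s (p1 (p2 (p3 (p4 n))))))))))) as [p5 [le [Ip5 Le]]].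
  set (q45 := fun n => p4 (p5 n)).
  assert (I45 : forall n, (q45 n < q45 (S n))%nat) by (intro n; unfold q45; apply incr_comp; auto).
  set (q35 := fun n => p3 (q45 n)).
  assert (I35 : forall n, (q35 n < q35 (S n))%nat) by (intro n; unfold q35; apply incr_comp; auto).
  set (q25 := fun n => p2 (q35 n)).
  assert (I25 : forall n, (q25 n < q25 (S n))%nat) by (intro n; unfold q25; apply incr_comp; auto).
  set (q15 := fun n => p1 (q25 n)).
  assert (I15 : forall n, (q15 n < q15 (S n))%nat) by (intro n; unfold q15; apply incr_comp; auto).
  set (tt := fun n => s (q15 n)).
  exists (mkpt la lb lc ld le).
  assert (LE : is_lim_seq (fun n => e (tt n)) le) by exact Le.
  assert (LA : is_lim_seq (fun n => a (tt n)) la) by exact (sub _ _ q25 I25 La).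
  split; [|split].
  - exists tt. split; [|split; [|split; [|split; [|split]]]].
    + apply is_lim_seq_le_m_loc with (fun n => tk (q15 n + N0)%nat).
      * exists O. intros n _. apply Hs.
      * apply (sub tk m_infty (fun n => (q15 n + N0)%nat)); [intro n; specialize (I15 n); lia| exact Ltk].
    + exact LA.
    + exact (sub _ _ q35 I35 Lb).
    + exact (sub _ _ q45 I45 Lc).
    + exact (sub _ _ p5 Ip5 Ld).
    + exact LE.
  - intro Heq. assert (la = -1) by (change (Sp (mkpt la lb lc ld le) = -1); rewrite Heq; reflexivity).
    assert (Hlow : forall n, eta g - 1 <= a (tt n)).
    { intro n. pose proof (proj1 (proj2 (Hs (q15 n)))). unfold tt. lra. }
    assert (h := is_lim_seq_le (fun _ => eta g - 1) (fun n => a (tt n)) (eta g - 1) la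
                  Hlow (is_lim_seq_const _) LA).
    simpl in h. lra.
  - simpl.
    assert (Lt : is_lim_seq (fun n => e (tk (q15 n + N0)%nat)) 0).
    { apply (sub (fun m => e (tk m)) 0 (fun n => (q15 n + N0)%nat)); [intro n; specialize (I15 n); lia| exact L5]. }
    assert (h1 := is_lim_seq_le (fun _ => 0) (fun n => e (tt n)) 0 le (fun n => HE _) (is_lim_seq_const _) LE).
    assert (h2 := is_lim_seq_le (fun n => e (tt n)) (fun n => e (tk (q15 n + N0)%nat)) le 0
                  (fun n => proj2 (proj2 (Hs (q15 n)))) LE Lt).
    simpl in h1, h2. lra.
Qed.
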